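(* Let $g\ge2$ and $n\ge2$. Regarding $P_{g,n}(a_1,\dots,a_n)$ as a polynomial in $a_1,\dots,a_n$, we have $P_{g,n}|_{a_i=0}\equiv0$ identically (as a polynomial in the remaining variables) for each $i=1,\dots,n$.
   Context: For $g\ge2$, $n\ge1$, $$P_{g,n}(a_1,\dots,a_n):=\sum_{k=1}^n\frac{(-1)^k(2g-3+k)!}{k!}\sum_{(I_1,\dots,I_k)}\ \sum_{\substack{d_1,\dots,d_k\in\mathbb{Z}_{\ge0}\\ d_1+\cdots+d_k=g-2+n}}\prod_{j=1}^k\binom{2a_{[I_j]}+1}{2d_j}\prod_{i=1}^{|I_j|-1}(2d_j+1-2i),$$ where $(I_1,\dots,I_k)$ runs over ordered $k$-tuples of nonempty pairwise disjoint subsets of $\{1,\dots,n\}$ with union $\{1,\dots,n\}$, $a_{[I]}:=\sum_{\ell\in I}a_\ell$, and $\binom{x}{m}:=x(x-1)\cdots(x-m+1)/m!$ for $m\ge0$, a polynomial in $x$. *)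

(* Defs.v *)
From HB Require Import structures.
From mathcomp Require Import all_boot all_order all_algebra.
Set Implicit Arguments. Unset Strict Implicit. Unset Printing Implicit Defensive.
Import Order.TTheory GRing.Theory Num.Theory.
Local Open Scope ring_scope.

Definition binomr (R : numFieldType) (x : R) (m : nat) : R :=
  (\prod_(i < m) (x - i%:R)) / (m`!)%:R.

Definition ordered_set_partition (n k : nat) (I : {ffun 'I_k -> {set 'I_n}}) : bool :=
  [&& [forall j, I j != set0],
      [forall j1, forall j2, (j1 != j2) ==> [disjoint I j1 & I j2]]
    & (\bigcup_(j < k) I j == [set: 'I_n])].

Definition aset (R : numFieldType) (n : nat) (a : 'I_n -> R) (S : {set 'I_n}) : R :=
  \sum_(l in S) a l.

(* P_{g,n}(a_1,...,a_n), evaluated at a point a of R^n.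
   The d_j satisfy d_j <= g-2+n, so ranging d_j over 'I_(g-1+n) loses nothing. *)
Definition Pgn (R : numFieldType) (g n : nat) (a : 'I_n -> R) : R :=
  \sum_(1 <= k < n.+1)
    ((-1) ^+ k * (((2 * g - 3 + k)`!)%:R / (k`!)%:R) *
     \sum_(I : {ffun 'I_k -> {set 'I_n}} | ordered_set_partition I)
       \sum_(d : {ffun 'I_k -> 'I_(g - 1 + n)} |
               (\sum_(j < k) (d j : nat))%N == (g - 2 + n)%N)
         \prod_(j < k)
           (binomr (2 * aset a (I j) + 1) (2 * d j)%N *
            \prod_(1 <= i < #|I j|) (((2 * d j + 1)%N)%:R - ((2 * i)%N)%:R))).

(* Main.v *)
Require Import Defs.
From HB Require Import structures.
From mathcomp Require Import all_boot all_order all_algebra.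
From mathcomp Require Import ring zify.
Set Implicit Arguments. Unset Strict Implicit. Unset Printing Implicit Defensive.
Import Order.TTheory GRing.Theory Num.Theory.
Local Open Scope ring_scope.

Lemma card_cup (T : finType) k (F : 'I_k -> {set T}) :
  (forall j1 j2, j1 != j2 -> [disjoint F j1 & F j2]) ->
  #|\bigcup_(j < k) F j| = (\sum_(j < k) #|F j|)%N.
Proof.
elim: k F => [|k IH] F H; first by rewrite !big_ord0 cards0.
rewrite big_ord_recr [in RHS]big_ord_recr /= cardsU IH; last first.
  by move=> j1 j2 ne; apply: H; apply: contra ne => /eqP /(congr1 val) /= E; apply/eqP/val_inj.
suff -> : (\bigcup_(j < k) F (widen_ord (leqnSn k) j)) :&: F ord_max = set0.
  by rewrite cards0 subn0.
apply/setP => x; rewrite !inE; apply/negbTE/andP; case=> /bigcupP [j _ xj] xm.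
have ne : widen_ord (leqnSn k) j != ord_max.
  by apply/eqP => /(congr1 val) /= E; move: (ltn_ord j); rewrite E ltnn.
by rewrite (disjointFr (H _ _ ne) xj) in xm.
Qed.

Section Main.
Variables (R : numFieldType) (n : nat) (a : 'I_n -> R) (i : 'I_n) (N D : nat).
Hypothesis ai0 : a i = 0.

Definition F (A : {set 'I_n}) (dd : nat) : R :=
  binomr (2 * aset a A + 1) (2 * dd)%N *
  \prod_(1 <= l < #|A|) (((2 * dd + 1)%N)%:R - ((2 * l)%N)%:R).

Definition partS k (S : {set 'I_n}) (I : {ffun 'I_k -> {set 'I_n}}) : bool :=
  [&& [forall j, I j != set0],
      [forall j1, forall j2, (j1 != j2) ==> [disjoint I j1 & I j2]]
    & (\bigcup_(j < k) I j == S)].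

Definition sumD k (d : {ffun 'I_k -> 'I_N}) : bool :=
  (\sum_(j < k) (d j : nat))%N == D.

Definition W k (I : {ffun 'I_k -> {set 'I_n}}) (d : {ffun 'I_k -> 'I_N}) : R :=
  \prod_(j < k) F (I j) (d j).

Definition G k S : R :=
  \sum_(p : {ffun 'I_k -> {set 'I_n}} * {ffun 'I_k -> 'I_N} | partS S p.1 && sumD p.2)
     W p.1 p.2.

Lemma partS_ne k S I j : @partS k S I -> I j != set0.
Proof. by case/and3P => /forallP. Qed.
Lemma partS_disj k S I j1 j2 : @partS k S I -> j1 != j2 -> [disjoint I j1 & I j2].
Proof. by case/and3P => _ /forallP /(_ j1) /forallP /(_ j2) /implyP H _ ne; apply: H. Qed.
Lemma partS_cup k S I : @partS k S I -> \bigcup_(j < k) I j = S.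
Proof. by case/and3P => _ _ /eqP. Qed.

Lemma partS_card k S I : @partS k S I -> #|S| = (\sum_(j < k) #|I j|)%N.
Proof. move=> P; rewrite -(partS_cup P) card_cup //. move=> j1 j2. exact: (partS_disj P). Qed.

Lemma partS_cardk k S I : @partS k S I -> (k <= #|S|)%N.
Proof.
move=> P; rewrite (partS_card P).
apply: leq_trans (_ : (\sum_(j < k) 1 <= _)%N); first by rewrite sum1_card card_ord.
by apply: leq_sum => j _; rewrite card_gt0 (partS_ne _ P).
Qed.

Definition T := [set~ i].

Lemma cardT : #|T| = n.-1.
Proof. by rewrite cardsC1 card_ord. Qed.

Lemma G0 : (2 <= n)%N -> G 0 T = 0.
Proof.
move=> hn; rewrite /G big_pred0 // => p; apply/negbTE; apply/negP => /andP [P _].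
have := partS_cup P; rewrite big_ord0 => E.
have := cardT; rewrite -E cards0 => E2; move: hn; by case: (n) E2 => [|[|m]].
Qed.

Lemma Gn : G n T = 0.
Proof.
rewrite /G big_pred0 // => p; apply/negbTE; apply/negP => /andP [P _].
have := partS_cardk P; have := ltn_ord i; rewrite cardT; lia.
Qed.


Lemma disjP' (A B : {set 'I_n}) : (forall x, x \in A -> x \in B -> False) -> [disjoint A & B].
Proof.
move=> H; rewrite -setI_eq0; apply/eqP/setP => x; rewrite !inE.
by apply/negbTE/andP => -[]; exact: H.
Qed.

Lemma notinT k (J : {ffun 'I_k -> {set 'I_n}}) x : partS T J -> i \notin J x.
Proof.
move=> P; apply/negP => H.
have : i \in \bigcup_(j < k) J j by apply/bigcupP; exists x.
by rewrite (partS_cup P) !inE eqxx.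
Qed.

Lemma setD1_id (A : {set 'I_n}) : i \notin A -> A :\ i = A.
Proof. by move=> H; apply/setP => z; rewrite !inE; case: eqP => // ->; rewrite (negbTE H). Qed.

Definition blk k (I : {ffun 'I_k.+1 -> {set 'I_n}}) : 'I_k.+1 :=
  odflt ord0 [pick j | i \in I j].

Lemma blkP k I : @partS k.+1 setT I -> i \in I (blk I).
Proof.
move=> P; rewrite /blk; case: pickP => [j //|H].
have : i \in \bigcup_(j < k.+1) I j by rewrite (partS_cup P) inE.
by case/bigcupP => j _ ij; have := H j; rewrite /= ij.
Qed.

Lemma blk_eq k S I j : @partS k.+1 S I -> i \in I j -> blk I = j.
Proof.
move=> P ij; rewrite /blk; case: pickP => [j' ij'|H] /=; last by rewrite H in ij.
apply/eqP; apply: contraT => ne.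
by rewrite (disjointFr (partS_disj P ne) ij') in ij.
Qed.

Definition aug k (J : {ffun 'I_k -> {set 'I_n}}) (j : 'I_k) : {ffun 'I_k -> {set 'I_n}} :=
  [ffun x => if x == j then i |: J x else J x].
Definition rem k (I : {ffun 'I_k -> {set 'I_n}}) : {ffun 'I_k -> {set 'I_n}} :=
  [ffun x => I x :\ i].

Lemma notin_other k I x : @partS k.+1 setT I -> x != blk I -> i \notin I x.
Proof.
move=> P ne; apply/negP => ix.
by rewrite (blk_eq P ix) eqxx in ne.
Qed.

Lemma remP k I : @partS k.+1 setT I -> I (blk I) != [set i] -> partS T (rem I).
Proof.
move=> P ns; apply/and3P; split.
- apply/forallP => x; rewrite ffunE.
  case: (eqVneq x (blk I)) => [->|ne].
    apply: contra ns => /eqP E; rewrite -(setD1K (blkP P)) E setU0 //.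
  by rewrite setD1_id ?(partS_ne _ P) ?notin_other.
- apply/forallP => x; apply/forallP => y; apply/implyP => ne; rewrite !ffunE.
  apply: disjP' => z; rewrite !inE => /andP [_ zx] /andP [_ zy].
  by rewrite (disjointFr (partS_disj P ne) zx) in zy.
- apply/eqP/setP => x; rewrite !inE; apply/bigcupP/idP => [[j _]|xi].
    by rewrite ffunE !inE => /andP [].
  have : x \in \bigcup_(j < k.+1) I j by rewrite (partS_cup P) inE.
  by case/bigcupP => j _ xj; exists j => //; rewrite ffunE !inE xi.
Qed.


Lemma augP k (J : {ffun 'I_k -> {set 'I_n}}) j : partS T J -> partS setT (aug J j).
Proof.
move=> P; apply/and3P; split.
- apply/forallP => x; rewrite ffunE; case: ifP => _; last exact: partS_ne P.
  by apply/set0Pn; exists i; rewrite setU11.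
- apply/forallP => x; apply/forallP => y; apply/implyP => ne; rewrite !ffunE.
  apply: disjP' => z.
  have hz : forall w, z \in J w -> z != i.
    by move=> w zw; apply: contraTneq zw => ->; rewrite notinT.
  have dj : z \in J x -> z \in J y -> False.
    by move=> zx zy; rewrite (disjointFr (partS_disj P ne) zx) in zy.
  case: ifP => [/eqP ex|_]; case: ifP => [/eqP ey|_]; rewrite ?inE.
  + by move: ne; rewrite ex ey eqxx.
  + case/orP => [/eqP ez zy|]; [by move: (hz _ zy); rewrite ez eqxx | exact: dj].
  + move=> zx /orP [/eqP ezi|]; [by move: (hz _ zx); rewrite ezi eqxx | exact: dj].
  + exact: dj.
- apply/eqP/setP => x; rewrite inE; apply/bigcupP.
  case: (eqVneq x i) => [->|xi].
    by exists j => //; rewrite ffunE eqxx setU11.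
  have : x \in \bigcup_(j < k) J j by rewrite (partS_cup P) !inE.
  case/bigcupP => y _ xy; exists y => //; rewrite ffunE; case: ifP => _ //.
  by rewrite setU1r.
Qed.

Lemma remaug k (J : {ffun 'I_k -> {set 'I_n}}) j : partS T J -> rem (aug J j) = J.
Proof.
move=> P; apply/ffunP => x; rewrite !ffunE; case: ifP => _.
  by rewrite setU1K ?(notinT _ P).
by rewrite setD1_id ?(notinT _ P).
Qed.

Lemma augrem k I : @partS k.+1 setT I -> aug (rem I) (blk I) = I.
Proof.
move=> P; apply/ffunP => x; rewrite !ffunE; case: ifP => [/eqP ->|/negbT ne].
  by rewrite setD1K // blkP.
by rewrite setD1_id // notin_other.
Qed.

Lemma blk_aug k (J : {ffun 'I_k.+1 -> {set 'I_n}}) j : partS T J -> blk (aug J j) = j.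
Proof.
move=> P; apply: (blk_eq (augP j P)); by rewrite ffunE eqxx setU11.
Qed.

Lemma F_aug (A : {set 'I_n}) (dd : nat) : i \notin A -> A != set0 ->
  F (i |: A) dd = F A dd * (((2 * dd + 1)%N)%:R - ((2 * #|A|)%N)%:R).
Proof.
move=> iA A0; rewrite /F /aset big_setU1 //= ai0 add0r cardsU1 iA add1n.
rewrite big_nat_recr /= ?mulrA // card_gt0 //.
Qed.

Lemma W_aug k (J : {ffun 'I_k -> {set 'I_n}}) e j : partS T J ->
  W (aug J j) e = W J e * (((2 * e j + 1)%N)%:R - ((2 * #|J j|)%N)%:R).
Proof.
move=> P; rewrite /W (bigD1 j) //= [in RHS](bigD1 j) //= ffunE eqxx.
rewrite F_aug ?(notinT _ P) ?(partS_ne _ P) //.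
rewrite (eq_bigr (fun x => F (J x) (e x))); last first.
  by move=> x /negbTE ne; rewrite ffunE ne.
by rewrite mulrAC.
Qed.


Lemma L2 k :
  \sum_(p : {ffun 'I_k.+1 -> {set 'I_n}} * {ffun 'I_k.+1 -> 'I_N} |
          partS setT p.1 && sumD p.2 && (p.1 (blk p.1) != [set i])) W p.1 p.2
  = (((2 * D + k.+1)%N)%:R - ((2 * #|T|)%N)%:R) * G k.+1 T.
Proof.
rewrite (reindex_onto (fun q : ({ffun 'I_k.+1 -> {set 'I_n}} * {ffun 'I_k.+1 -> 'I_N}) * 'I_k.+1 => (aug q.1.1 q.2, q.1.2)) (fun p => ((rem p.1, p.2), blk p.1))) /=; last first.
  by move=> [I d] /= /andP [/andP [P _] ns]; rewrite augrem.
rewrite (eq_bigl (fun q => (partS T q.1.1 && sumD q.1.2) && xpredT q.2)); last first.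
  move=> [[J e] j] /=; rewrite andbT; apply/idP/idP.
  - case/andP => /andP [/andP [P S] ns] /eqP E.
    have E1 : rem (aug J j) = J by case: E.
    by rewrite S andbT -E1; exact: remP.
  - case/andP => P S; rewrite augP //= S blk_aug // remaug // eqxx andbT /=.
    rewrite ffunE eqxx; apply: contra (partS_ne j P) => /eqP E.
    apply/eqP/setP => z; have := setU1K (notinT j P); rewrite E => <-.
    by rewrite !inE; case: eqP.
rewrite -(pair_big (fun p => partS T p.1 && sumD p.2) xpredT (fun p j => W (aug p.1 j) p.2)) /=.
rewrite /G mulr_sumr; apply: eq_bigr => -[J e] /= /andP [P S].
under eq_bigr => j _ do rewrite W_aug //.
rewrite -mulr_sumr mulrC; congr (_ * _).
rewrite sumrB -!natr_sum; congr (_%:R - _%:R).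
  rewrite big_split /= -big_distrr /= (eqP S) sum1_card card_ord //.
by rewrite -big_distrr /= (partS_card P).
Qed.


Lemma Fsing dd : F [set i] dd = (dd == 0)%:R.
Proof.
rewrite /F /aset big_set1 ai0 mulr0 add0r cards1 big_geq // mulr1 /binomr.
case: dd => [|dd]; first by rewrite big_ord0 fact0 divr1.
rewrite mulnS !big_ord_recl /= subrr mul0r mulr0 mul0r //.
Qed.

Definition ins k (p : 'I_k.+1) (J : {ffun 'I_k -> {set 'I_n}}) : {ffun 'I_k.+1 -> {set 'I_n}} :=
  [ffun x => if unlift p x is Some y then J y else [set i]].
Definition insd k (p : 'I_k.+1) (e : {ffun 'I_k -> 'I_N}) (z : 'I_N) : {ffun 'I_k.+1 -> 'I_N} :=
  [ffun x => if unlift p x is Some y then e y else z].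
Definition restr (X : Type) k (p : 'I_k.+1) (I : {ffun 'I_k.+1 -> X}) : {ffun 'I_k -> X} :=
  [ffun y => I (lift p y)].

Lemma insP k p (J : {ffun 'I_k -> {set 'I_n}}) : partS setT (ins p J) = partS T J.
Proof.
apply/idP/idP => P.
- apply/and3P; split.
  + apply/forallP => y; have := partS_ne (lift p y) P; by rewrite ffunE liftK.
  + apply/forallP => y1; apply/forallP => y2; apply/implyP => ne.
    have ne' : lift p y1 != lift p y2 by apply: contra ne => /eqP /lift_inj ->.
    by have := partS_disj P ne'; rewrite !ffunE !liftK.
  + apply/eqP/setP => x; rewrite !inE; apply/bigcupP/idP => [[y _ xy]|xi].
      have ne : lift p y != p by rewrite eq_sym neq_lift.
      have := partS_disj P ne; rewrite !ffunE !liftK unlift_none => dj.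
      by apply: contraTneq xy => ->; rewrite (disjointFl dj) ?set11.
    have : x \in \bigcup_(j < k.+1) ins p J j by rewrite (partS_cup P) inE.
    case/bigcupP => x0 _; rewrite ffunE; case: unliftP => [y _ xy|_].
      by exists y.
    by rewrite inE (negbTE xi).
- apply/and3P; split.
  + apply/forallP => x; rewrite ffunE; case: unliftP => [y _|_].
      exact: partS_ne P.
    by apply/set0Pn; exists i; rewrite set11.
  + apply/forallP => x1; apply/forallP => x2; apply/implyP => ne; rewrite !ffunE.
    case: unliftP ne => [y1 ->|->]; case: unliftP => [y2 ->|->] ne.
    * apply: partS_disj P _; by apply: contra ne => /eqP ->.
    * by rewrite disjoint_sym disjoints1 (notinT _ P).
    * by rewrite disjoints1 (notinT _ P).
    * by rewrite eqxx in ne.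
  + apply/eqP/setP => x; rewrite inE; apply/bigcupP.
    case: (eqVneq x i) => [->|xi].
      by exists p => //; rewrite ffunE unlift_none set11.
    have : x \in \bigcup_(j < k) J j by rewrite (partS_cup P) !inE.
    by case/bigcupP => y _ xy; exists (lift p y) => //; rewrite ffunE liftK.
Qed.

Lemma Lsing k (hN : (0 < N)%N) (p : 'I_k.+1) :
  \sum_(q : {ffun 'I_k.+1 -> {set 'I_n}} * {ffun 'I_k.+1 -> 'I_N} |
          partS setT q.1 && sumD q.2 && (q.1 p == [set i])) W q.1 q.2 = G k T.
Proof.
set z := Ordinal hN.
transitivity (\sum_(q : {ffun 'I_k.+1 -> {set 'I_n}} * {ffun 'I_k.+1 -> 'I_N} |
    partS setT q.1 && sumD q.2 && (q.1 p == [set i]) && (q.2 p == z))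
    \prod_(y < k) F (q.1 (lift p y)) (q.2 (lift p y))).
  rewrite [RHS]big_mkcondr /=; apply: eq_bigr => -[I d] /= /andP [_ /eqP Ip].
  rewrite /W (bigD1_ord p) //= Ip Fsing.
  have -> : ((d p : nat) == 0%N) = (d p == z) by apply/eqP/eqP => [h|->//]; apply/val_inj.
  by case: (d p == z); rewrite ?mul1r ?mul0r.
rewrite (reindex_onto (fun r : {ffun 'I_k -> {set 'I_n}} * {ffun 'I_k -> 'I_N} => (ins p r.1, insd p r.2 z)) (fun q => (restr p q.1, restr p q.2))) /=; last first.
  move=> [I d] /= /andP [/andP [_ /eqP Ip] /eqP dp]; congr pair; apply/ffunP => x;
    rewrite !ffunE; case: unliftP => [y ->|->]; rewrite ?ffunE ?liftK //.
rewrite /G; apply: eq_big => -[J e] /=.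
  have h1 : restr p (ins p J) = J by apply/ffunP => y; rewrite !ffunE liftK.
  have h2 : restr p (insd p e z) = e by apply/ffunP => y; rewrite !ffunE liftK.
  have h3 : sumD (insd p e z) = sumD e.
    rewrite /sumD (bigD1_ord p) //= ffunE unlift_none add0n.
    by under eq_bigr do rewrite ffunE liftK.
  by rewrite insP h3 h1 h2 !ffunE unlift_none !eqxx !andbT.
by move=> _; apply: eq_bigr => y _; rewrite !ffunE liftK.
Qed.

Lemma L3 k (hN : (0 < N)%N) :
  \sum_(q : {ffun 'I_k.+1 -> {set 'I_n}} * {ffun 'I_k.+1 -> 'I_N} |
          partS setT q.1 && sumD q.2 && (q.1 (blk q.1) == [set i])) W q.1 q.2
  = (k.+1)%:R * G k T.
Proof.
rewrite (partition_big (fun q => blk q.1) xpredT) //=.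
rewrite (eq_bigr (fun _ => G k T)).
  by rewrite sumr_const card_ord mulr_natl.
move=> p _; rewrite -(Lsing hN p); apply: eq_bigl => -[I d] /=.
apply/idP/idP.
  by case/andP => /andP [/andP [P S] /eqP E] /eqP <-; rewrite P S E eqxx.
case/andP => /andP [P S] /eqP E.
have bp : blk I = p by apply: (blk_eq P); rewrite E set11.
by rewrite P S bp E !eqxx.
Qed.


Lemma Grec k (hN : (0 < N)%N) :
  G k.+1 setT = (k.+1)%:R * G k T + (((2 * D + k.+1)%N)%:R - ((2 * #|T|)%N)%:R) * G k.+1 T.
Proof.
by rewrite /G (bigID (fun q : {ffun 'I_k.+1 -> {set 'I_n}} * {ffun 'I_k.+1 -> 'I_N} => q.1 (blk q.1) == [set i])) /= -(L3 _ hN) -L2.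
Qed.

End Main.

Theorem proposition5p3 (g n : nat) (hg : (2 <= g)%N) (hn : (2 <= n)%N)
    (R : numFieldType) (i : 'I_n) (a : 'I_n -> R) :
  a i = 0 -> Pgn g a = 0.
Proof.
move=> ai0.
have hN : (0 < g - 1 + n)%N by lia.
pose Ak k := (-1) ^+ k * (((2 * g - 2 + k)`!)%:R / (k`!)%:R) * G a (g - 1 + n) (g - 2 + n) k (T i).
rewrite /Pgn big_add1 /=.
rewrite (@telescope_sumr_eq _ 0 n Ak) // => [|k _].
  by rewrite /Ak Gn G0 // !mulr0 subrr.
rewrite pair_big /=.
rewrite (_ : \sum_(p | _) _ = G a (g - 1 + n) (g - 2 + n) k.+1 setT) //.
rewrite (@Grec _ _ a i (g - 1 + n) (g - 2 + n) ai0 k hN) cardT.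
have -> : (((2 * (g - 2 + n) + k.+1)%N)%:R - ((2 * n.-1)%N)%:R : R) = ((2 * g - 2 + k.+1)%N)%:R.
  apply/eqP; rewrite subr_eq -natrD; apply/eqP; congr _%:R; lia.
rewrite /Ak.
set m := (2 * g - 2 + k)%N.
have e1 : (2 * g - 3 + k.+1 = m)%N by rewrite /m; lia.
have e2 : (2 * g - 2 + k.+1 = m.+1)%N by rewrite /m; lia.
rewrite e1 e2 !factS !natrM !exprS.
have h1 : (k.+1)%:R != 0 :> R by rewrite pnatr_eq0.
have h2 : (k`!)%:R != 0 :> R by rewrite pnatr_eq0 -lt0n fact_gt0.
field.
by move: h1; rewrite h2 -natr1 addrC => ->.
Qed.
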